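(* Let $G$ be a compact, connected, simply connected simple Lie group with maximal torus $T$, $\mathfrak{h}=\mathrm{Lie}(T)$, simple roots $\Delta=\{a_1,\ldots,a_n\}$, highest root $d$, $\tilde a=-d$, and extended simple roots $\tilde\Delta=\{\tilde a,a_1,\ldots,a_n\}$. Let $g_1,\ldots,g_n$ be the positive integers with $\tilde a^\vee+\sum_{j=1}^n g_j a_j^\vee=0$ (the coroot integers). Let $x=\exp(\tilde x)\in T$ with $\tilde x$ in the closed fundamental alcove $A=\{\xi\in\mathfrak{h}: a_j(\xi)\ge 0\ \forall j,\ d(\xi)\le 1\}$, and suppose that (after renumbering the $a_j$) the set of extended simple roots whose walls contain $\tilde x$ (the simple roots of $Z_G(x)$) is $\Delta_x=\{\tilde a,a_1,\ldots,a_k\}$ with $k<n$. Let $Q^\vee(x)\subseteq Q^\vee$ be the $\mathbb{Z}$-span of the coroots $\tilde a^\vee,a_1^\vee,\ldots,a_k^\vee$ and $\mathfrak{h}(x)\subseteq\mathfrak{h}$ their real linear span. Then, with $N=\gcd(g_{k+1},\ldots,g_n)$, there is an exact sequence $$1\to Q^\vee(x)\to Q^\vee\cap\mathfrak{h}(x)\to\mathbb{Z}/N\mathbb{Z}\to 1.$$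
   Context: $Q^\vee=\sum_j\mathbb{Z}a_j^\vee$ is the coroot lattice, and $\exp:\mathfrak{h}\to T$ is normalized so that its kernel is $Q^\vee$. The wall of $\tilde a$ is $\{\xi: d(\xi)=1\}$ and the wall of $a_j$ is $\{\xi: a_j(\xi)=0\}$. The first map is the inclusion. *)

(* Defs.v *)
From HB Require Import structures.
From mathcomp Require Import all_boot all_order all_algebra.
Set Implicit Arguments. Unset Strict Implicit. Unset Printing Implicit Defensive.
Import Order.TTheory GRing.Theory Num.Theory.
Local Open Scope ring_scope.

(* The Cartan subalgebra h is modelled as R^n = 'rV[R]_n (n = rank),
   and the simple coroots a_j^vee are the rows of an invertible matrix C. *)

Definition ext_coroot {R : realFieldType} {n : nat} (C : 'M[R]_n) (g : 'I_n -> nat)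
  : 'rV[R]_n := - \sum_(j < n) (g j)%:R *: row j C.

Definition coroot_lattice {R : realFieldType} {n : nat} (C : 'M[R]_n)
  (v : 'rV[R]_n) : Prop :=
  exists z : 'I_n -> int, v = \sum_(j < n) row j C *~ z j.

Definition coroot_lattice_x {R : realFieldType} {n : nat} (C : 'M[R]_n)
  (g : 'I_n -> nat) (k : nat) (v : 'rV[R]_n) : Prop :=
  exists (z0 : int) (z : 'I_n -> int),
    v = ext_coroot C g *~ z0 + \sum_(j < n | (j < k)%N) row j C *~ z j.

Definition h_x {R : realFieldType} {n : nat} (C : 'M[R]_n)
  (g : 'I_n -> nat) (k : nat) (v : 'rV[R]_n) : Prop :=
  exists (r0 : R) (r : 'I_n -> R),
    v = r0 *: ext_coroot C g + \sum_(j < n | (j < k)%N) r j *: row j C.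

(* N = gcd(g_{k+1}, ..., g_n)  (0-indexed: indices j with k <= j < n) *)
Definition gcd_tail {n : nat} (g : 'I_n -> nat) (k : nat) : nat :=
  \big[gcdn/0%N]_(j < n | (k <= j)%N) g j.

(* Main.v *)
Require Import Defs.
From HB Require Import structures.
From mathcomp Require Import all_boot all_order all_algebra.
From Stdlib Require Import ClassicalEpsilon.
Import Order.TTheory GRing.Theory Num.Theory.
Local Open Scope ring_scope.

Section Aux.
Variables (R : realFieldType) (n : nat) (C : 'M[R]_n) (g : 'I_n -> nat) (k : nat).
Hypothesis hC : C \in unitmx.

Definition cf (v : 'rV[R]_n) (j : 'I_n) : R := (v *m invmx C) 0 j.

Lemma sum_rows (a : 'I_n -> R) : \sum_j a j *: row j C = (\row_j a j) *m C.
Proof. by rewrite mulmx_sum_row; apply: eq_bigr => j _; rewrite mxE. Qed.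

Lemma cf_row (a : 'I_n -> R) j : cf ((\row_j a j) *m C) j = a j.
Proof. by rewrite /cf mulmxK // mxE. Qed.

Lemma cf_sum (a : 'I_n -> R) j : cf (\sum_j a j *: row j C) j = a j.
Proof. by rewrite sum_rows cf_row. Qed.

Lemma v_cf v : v = \sum_j cf v j *: row j C.
Proof.
rewrite sum_rows; have -> : (\row_j cf v j) = v *m invmx C.
  by apply/rowP => j; rewrite mxE /cf; congr (_ _ _); apply: val_inj; case: (0 : 'I_1) => [[]].
by rewrite mulmxKV.
Qed.

Lemma cf_eq u v : (forall j, cf u j = cf v j) -> u = v.
Proof. by move=> H; rewrite (v_cf u) (v_cf v); apply: eq_bigr => j _; rewrite H. Qed.

Lemma cfD u v j : cf (u + v) j = cf u j + cf v j.
Proof. by rewrite /cf mulmxDl mxE. Qed.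

Definition isZ (x : R) := exists z : int, x = z%:~R.

Lemma CL v : coroot_lattice C v <-> forall j, isZ (cf v j).
Proof.
split.
  case=> z ->; move=> j; exists (z j).
  under eq_bigr do rewrite -scaler_int.
  by rewrite cf_sum.
move=> H; have [z Hz] := fin_all_exists H; exists z.
rewrite {1}(v_cf v); apply: eq_bigr => j _; by rewrite Hz scaler_int.
Qed.

Lemma expand (r0 : R) (r : 'I_n -> R) :
  r0 *: ext_coroot C g + \sum_(j < n | (j < k)%N) r j *: row j C =
  \sum_(j < n) ((if (j < k)%N then r j else 0) - r0 * (g j)%:R) *: row j C.
Proof.
rewrite /ext_coroot scalerN scaler_sumr -sumrN addrC [X in X + _]big_mkcond -big_split /=.
apply: eq_bigr => j _; rewrite scalerA scalerBl; case: ifP => _; by rewrite ?scale0r ?add0r.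
Qed.

Lemma HX v : h_x C g k v <-> exists t : R, forall j : 'I_n, (k <= j)%N -> cf v j = t * (g j)%:R.
Proof.
split.
  case=> r0 [r ->]; exists (- r0) => j hj; rewrite expand cf_sum.
  by rewrite leqNgt in hj; rewrite (negbTE hj) sub0r mulNr.
case=> t Ht; exists (- t), (fun j => cf v j - t * (g j)%:R).
apply: cf_eq => j; rewrite expand cf_sum mulNr opprK.
case: ifP => hj; first by rewrite subrK.
by rewrite add0r Ht // leqNgt hj.
Qed.

Lemma CLX v : coroot_lattice_x C g k v <->
  (forall j : 'I_n, (j < k)%N -> isZ (cf v j)) /\
  exists z0 : int, forall j : 'I_n, (k <= j)%N -> cf v j = z0%:~R * (g j)%:R.
Proof.
split.
  case=> z0 [z ->]; rewrite -scaler_int.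
  under eq_bigr do rewrite -scaler_int.
  rewrite expand; split.
    by move=> j hj; rewrite cf_sum hj; exists (z j - z0 * (g j)%:Z); rewrite intrD intrN intrM.
  exists (- z0) => j hj; rewrite cf_sum.
  by rewrite leqNgt in hj; rewrite (negbTE hj) sub0r intrN mulNr.
case=> H [z0 Hz0].
have [z Hz] : exists z : 'I_n -> int, forall j : 'I_n, (j < k)%N -> cf v j = (z j)%:~R.
  have : forall j : 'I_n, exists zz : int, (j < k)%N -> cf v j = zz%:~R.
    move=> j; case: (ltnP j k) => hj; last by exists 0.
    by have [zz ->] := H j hj; exists zz.
  by move/fin_all_exists.
exists (- z0), (fun j => z j - z0 * (g j)%:Z).
rewrite -scaler_int; under eq_bigr do rewrite -scaler_int.
apply: cf_eq => j; rewrite expand cf_sum.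
case: ifP => hj.
  by rewrite Hz // intrB intrM intrN mulNr opprK subrK.
by rewrite add0r intrN mulNr opprK Hz0 // leqNgt hj.
Qed.

Lemma bez (t : R) : (forall j : 'I_n, (k <= j)%N -> isZ (t * (g j)%:R)) ->
  isZ (t * (gcd_tail g k)%:R).
Proof.
move=> H; rewrite /gcd_tail; apply: (big_ind (fun a : nat => isZ (t * a%:R))) => //.
- by exists 0; rewrite mulr0.
move=> a b [za Ha] [zb Hb]; have [u [w Huw]] := Bezoutz a b.
exists (u * za + w * zb).
have -> : (gcdn a b)%:R = (gcdz a b)%:~R :> R by [].
rewrite -Huw intrD !intrM mulrDr (mulrCA t u%:~R) (mulrCA t w%:~R).
have -> : t * a%:~R = za%:~R by exact: Ha.
have -> : t * b%:~R = zb%:~R by exact: Hb.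
by rewrite intrD !intrM.
Qed.

Lemma gcd_dvd (j : 'I_n) : (k <= j)%N -> (gcd_tail g k %| g j)%N.
Proof. by move=> hj; rewrite /gcd_tail (bigD1 j) //= dvdn_gcdl. Qed.

End Aux.

Arguments gcd_dvd {n g k j}.
Arguments bez {R n g k t}.
Arguments cf_sum {R n C}.
Arguments CL {R n C}.
Arguments HX {R n C g k}.
Arguments CLX {R n C g k}.
Arguments cfD {R n C}.
Arguments isZ {R}.
Arguments cf {R n}.
Theorem mainTheorem3 (R : realFieldType) (n : nat) (C : 'M[R]_n)
  (g : 'I_n -> nat) (k : nat)
  (hC : C \in unitmx)
  (hg : forall j, (0 < g j)%N)
  (hk : (k < n)%N) :
  let M := fun v => coroot_lattice C v /\ h_x C g k v in
  let N := gcd_tail g k in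
  (forall v, coroot_lattice_x C g k v -> M v) /\
  exists phi : 'rV[R]_n -> int,
    (forall u v, M u -> M v -> phi (u + v) = phi u + phi v) /\
    (forall v, M v -> (coroot_lattice_x C g k v <-> (N%:Z %| phi v)%Z)) /\
    (forall m : int, exists v, M v /\ (phi v = m %[mod N%:Z])%Z).
Proof.
move=> M N.
pose j0 : 'I_n := Ordinal hk.
have hj0 : (k <= j0)%N by [].
have G0 : (g j0)%:R != 0 :> R by rewrite pnatr_eq0 -lt0n hg.
have Npos : (0 < N)%N.
  rewrite lt0n; apply/negP => /eqP N0.
  have : (N %| g j0)%N := gcd_dvd hj0; rewrite N0 dvd0n => /eqP gz.
  by have := hg j0; rewrite gz.
have N0 : N%:R != 0 :> R by rewrite pnatr_eq0 -lt0n.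
pose tv v := cf C v j0 / (g j0)%:R.
have tv_eq : forall v t, cf C v j0 = t * (g j0)%:R -> tv v = t.
  by move=> v t H; rewrite /tv H mulfK.
pose phi v := epsilon (inhabits (0 : int)) (fun m : int => m%:~R = tv v * N%:R).
have phi_spec : forall v m, m%:~R = tv v * N%:R -> phi v = m.
  move=> v m H; apply: (@intr_inj R); rewrite H.
  by apply: (epsilon_spec (inhabits (0 : int)) (fun m : int => m%:~R = tv v * N%:R)); exists m.
have Mt : forall v, M v -> (forall j : 'I_n, (k <= j)%N -> cf C v j = tv v * (g j)%:R).
  move=> v [_ /(HX hC) [t Ht]] j hj; by rewrite (tv_eq v t (Ht j0 hj0)) Ht.
have phiP : forall v, M v -> (phi v)%:~R = tv v * N%:R.
  move=> v Mv; have [z Hz] : isZ (tv v * N%:R).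
    apply: bez => j hj; rewrite -Mt //; by move: Mv => [/(CL hC) H _]; apply: H.
  by rewrite (phi_spec v z (esym Hz)) Hz.
split.
  move=> v Hx; have [H [z0 Hz0]] := (CLX hC v).1 Hx; split.
    apply/(CL hC) => j; case: (ltnP j k) => hj; first exact: H.
    by exists (z0 * (g j)%:Z); rewrite Hz0 // intrM.
  by apply/(HX hC); exists z0%:~R.
exists phi; split.
  move=> u v Mu Mv; apply: phi_spec.
  rewrite intrD !phiP // -mulrDl /tv cfD !mulrDl //.
split.
  move=> v Mv; split.
    move=> /(CLX hC) [_ [z0 Hz0]]; apply/dvdzP; exists z0.
    apply: (@intr_inj R); rewrite phiP // intrM (tv_eq v z0%:~R (Hz0 j0 hj0)) //.
  move=> /dvdzP [q Hq]; apply/(CLX hC); split.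
    by move=> j _; move: Mv => [/(CL hC) H _]; apply: H.
  exists q => j hj; rewrite Mt //; congr (_ * _).
  have : tv v * N%:R = q%:~R * N%:R by rewrite -phiP // Hq intrM.
  by move/(mulIf N0).
move=> m.
pose a (j : 'I_n) : R := if (k <= j)%N then (m * (g j %/ N)%N%:Z)%:~R else 0.
pose v := \sum_j a j *: row j C.
have cfv : forall j, cf C v j = a j by move=> j; rewrite /v (cf_sum hC).
have Ht : forall j : 'I_n, (k <= j)%N -> cf C v j = m%:~R / N%:R * (g j)%:R.
  move=> j hj; rewrite cfv /a hj intrM.
  have -> : (g j)%:R = (g j %/ N)%:R * N%:R :> R by rewrite -natrM divnK // gcd_dvd.
  by rewrite [_ * N%:R]mulrC mulrA divfK.
have Mv : M v.
  split; last by apply/(HX hC); exists (m%:~R / N%:R).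
  apply/(CL hC) => j; rewrite cfv /a; case: ifP => _; last by exists 0.
  by eexists.
exists v; split => //.
have -> : phi v = m.
  by apply: phi_spec; rewrite (tv_eq v _ (Ht j0 hj0)) divfK.
by [].
Qed.
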